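(* Let $\mathfrak{T}$ be a topological space and let $\mathfrak{H}$ be the complete Heyting algebra of open sets of $\mathfrak{T}$, with point-free coderivative $\divideontimes \mathsf{h} := \bigwedge_{\mathsf{i}\in\mathfrak{H}}(\mathsf{i}\vee(\mathsf{i}\to\mathsf{h}))$. (1) If $\mathfrak{T}$ is scattered, then $\divideontimes$ is a $\mathsf{KM}$-operator on $\mathfrak{H}$. (2) If $\mathfrak{T}$ is $T_0$ and $\divideontimes$ is a $\mathsf{KM}$-operator on $\mathfrak{H}$, then $\mathfrak{T}$ is scattered.
   Context: A topological space is scattered if every nonempty subset has an isolated point (relative to the subspace). A unary operation $\Box$ on a Heyting algebra is a $\mathsf{KM}$-operator if for all $a,b$: $\Box\top=\top$, $\Box(a\wedge b)=\Box a\wedge\Box b$, $a\le\Box a$, $\Box a\le b\vee(b\to a)$, and $(\Box a\to a)\le a$. *)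

(* Defs.v *)
From HB Require Import structures.
From mathcomp Require Import all_boot all_order.
From mathcomp Require Import all_classical topology.
Set Implicit Arguments. Unset Strict Implicit. Unset Printing Implicit Defensive.
Local Open Scope classical_set_scope.

(* The complete Heyting algebra of open sets of a topological space T:
   elements are the open subsets of T, order is inclusion, finite meet is
   intersection, join is union, top is setT, and infinite meets are
   interiors of intersections. *)

Section OpenHeyting.
Variable T : topologicalType.

(* Heyting implication in the algebra of opens: the largest open U with
   U `&` a `<=` b, i.e. the interior of (~` a `|` b). *)
Definition oimp (a b : set T) : set T := (~` a `|` b)°.

Definition obigmeet (F : set T -> set T) : set T :=
  (\bigcap_(i in [set i : set T | open i]) F i)°.

Definition coder (h : set T) : set T := obigmeet (fun i => i `|` oimp i h).

Definition KM_operator (box : set T -> set T) : Prop :=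
  [/\ box setT = setT,
      (forall a b, open a -> open b -> box (a `&` b) = box a `&` box b),
      (forall a, open a -> a `<=` box a),
      (forall a b, open a -> open b -> box a `<=` b `|` oimp b a)
    & (forall a, open a -> oimp (box a) a `<=` a)].

Definition scattered : Prop :=
  forall A : set T, A !=set0 ->
    exists x, A x /\ exists U : set T, open U /\ U `&` A = [set x].

End OpenHeyting.

(* Main.v *)
Require Import Defs.
From mathcomp Require Import all_boot all_order.
From mathcomp Require Import all_classical topology.
Local Open Scope classical_set_scope.

Section Aux.
Variable T : topologicalType.

Definition Sset (h : set T) := \bigcap_(i in [set i : set T | open i]) (i `|` oimp i h).

Lemma coder_sub h : coder h `<=` Sset h.
Proof. exact: interior_subset. Qed.

Lemma sub_coder {h} {V : set T} : open V -> V `<=` Sset h -> V `<=` coder h.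
Proof. by move=> oV sV; rewrite /coder /obigmeet -open_subsetE. Qed.

Lemma nbhs_open {U : set T} {x} : open U -> U x -> nbhs x U.
Proof. by move=> oU Ux; apply: open_nbhs_nbhs; split. Qed.

Lemma coderT : coder (@setT T) = setT.
Proof.
apply/seteqP; split => // x _; apply: (@sub_coder _ setT) => //; first exact: openT.
move=> y _ i _; right; rewrite /oimp setUT; exact: filterT.
Qed.

Lemma coderI (a b : set T) : coder (a `&` b) = coder a `&` coder b.
Proof.
rewrite /coder /obigmeet -interiorI; congr interior.
apply/seteqP; split => x.
  move=> H; split => i oi; case: (H i oi) => [|Hn]; try by left.
    right; rewrite /oimp /interior /= in Hn *.
    by apply: filterS Hn => y [|[]]; by [left|right].
  right; rewrite /oimp /interior /= in Hn *.
  by apply: filterS Hn => y [|[]]; by [left|right].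
move=> [H1 H2] i oi; case: (H1 i oi) => [|n1]; first by left.
case: (H2 i oi) => [|n2]; first by left.
right; rewrite /oimp /interior /= in n1 n2 *; apply: filterS (filterI n1 n2) => y [[?|?] [?|?]]; by [left|right].
Qed.

Lemma coder_incr (a : set T) : open a -> a `<=` coder a.
Proof.
move=> oa; apply: sub_coder => // y ay i _; right; rewrite /oimp /interior /=.
by apply: filterS (nbhs_open oa ay) => z; right.
Qed.

Lemma coder_4 (a b : set T) : open b -> coder a `<=` b `|` oimp b a.
Proof. by move=> ob x /coder_sub /(_ b ob). Qed.

Lemma coder_lob (a : set T) : scattered T -> open a -> oimp (coder a) a `<=` a.
Proof.
move=> sc oa x Wx; have [//|nax] := pselect (a x).
have [z [[Wz naz] [U [oU UA]]]] :
  exists z, (oimp (coder a) a `&` ~` a) z /\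
    exists U : set T, open U /\ U `&` (oimp (coder a) a `&` ~` a) = [set z].
  by apply: sc; exists x.
have Uz : U z by have : [set z] z by []; rewrite -UA => -[].
have eqz w : U w -> oimp (coder a) a w -> ~ a w -> w = z.
  by move=> Uw Ww nw; have : (U `&` (oimp (coder a) a `&` ~` a)) w by [];
     rewrite UA.
have oV : open (U `&` oimp (coder a) a) by apply: openI => //; exact: open_interior.
have sub : U `&` oimp (coder a) a `<=` Sset a.
  move=> y [Uy Wy] i oi; have [ay|nay] := pselect (a y).
    by right; rewrite /oimp /interior /=; apply: filterS (nbhs_open oa ay) => w; right.
  have yz := eqz _ Uy Wy nay; subst y.
  have [iz|niz] := pselect (i z); first by left.
  right; rewrite /oimp /interior /=; apply: filterS (nbhs_open oV (conj Uz Wz)) => w [Uw Ww].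
  have [aw|naw] := pselect (a w); first by right.
  by left; rewrite (eqz _ Uw Ww naw).
have cz : coder a z by apply: (sub_coder oV sub); split.
exfalso; case: (interior_subset Wz) => [/(_ cz)|/naz] //.
Qed.

Lemma km_scattered : kolmogorov_space T -> KM_operator (@coder T) -> scattered T.
Proof.
move=> k0 [_ _ _ _ lob] A [x0 Ax0].
have [//|nis] := pselect (exists x, A x /\ exists U : set T, open U /\ U `&` A = [set x]).
exfalso.
have noniso y (W : set T) : A y -> nbhs y W -> exists y1, [/\ W y1, A y1 & y1 <> y].
  move=> Ay; rewrite nbhsE => -[U [oU Uy] UW].
  have [[y1 [? ? ?]]|nex] := pselect (exists y1, [/\ U y1, A y1 & y1 <> y]).
    by exists y1; split => //; apply: UW.
  exfalso; apply: nis; exists y; split => //; exists U; split => //.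
  apply/seteqP; split => w; last by move=> ->; split.
  move=> [Uw Aw]; have [//|nwy] := pselect (w = y).
  by exfalso; apply: nex; exists w.
set a := ~` closure A.
have oa : open a by rewrite /a openC; exact: closed_closure.
have gen y : Sset a y -> A y -> nbhs y (closure [set y] `|` a).
  move=> Sy Ay.
  have oi : open (~` closure [set y]) by rewrite openC; exact: closed_closure.
  case: (Sy _ oi) => [/(_ (@subset_closure _ [set y] y erefl))//|].
  rewrite /oimp /interior /= => H; apply: filterS H => w [|aw]; last by right.
  by move=> /contrapT; left.
have ca : coder a `<=` a.
  move=> x cx clx.
  move: cx; rewrite /coder /obigmeet /interior /= nbhsE => -[V [oV Vx] VS].
  have [y0 [Ay0 Vy0]] := clx V (nbhs_open oV Vx).
  have g0 := gen y0 (VS _ Vy0) Ay0.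
  have [y1 [[Vy1 [c1|a1]] Ay1 ne]] := noniso y0 _ Ay0 (filterI (nbhs_open oV Vy0) g0);
    last by apply: a1; exact: subset_closure.
  have g1 := gen y1 (VS _ Vy1) Ay1.
  have [w [/= -> [c0|a0]]] := c1 _ g1; last by apply: a0; exact: subset_closure.
  have /eqP ne' : y0 <> y1 by move=> e; apply: ne.
  have [B [[Bn nB]|[Bn nB]]] := k0 _ _ ne'.
    move: Bn nB; rewrite !in_setE => Bn nB; have [u [/= -> Bu]] := c0 _ Bn; by apply: nB.
  move: Bn nB; rewrite !in_setE => Bn nB; have [u [/= -> Bu]] := c1 _ Bn; by apply: nB.
have := lob a oa x0.
have Wx0 : oimp (coder a) a x0.
  rewrite /oimp /interior /=; apply: filterS (@filterT _ _ _) => w _.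
  have [aw|naw] := pselect (a w); first by right.
  by left => /ca.
by move=> /(_ Wx0); apply; exact: subset_closure.
Qed.

End Aux.

Theorem proposition4p8 (T : topologicalType) :
  (scattered T -> KM_operator (@coder T)) /\
  (kolmogorov_space T -> KM_operator (@coder T) -> scattered T).
Proof.
split.
  move=> sc; split.
  - exact: coderT.
  - by move=> a b _ _; exact: coderI.
  - exact: coder_incr.
  - by move=> a b _ ob; exact: coder_4.
  - by move=> a oa; exact: coder_lob.
exact: km_scattered.
Qed.
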